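(* Let $b>3$ be an integer. Then there is at most one prime number that is antipalindromic in base $b$, namely: if $p$ is a prime that is antipalindromic in base $b$, then $p=\frac{b-1}{2}$.
   Context: For an integer $b\ge 2$, every natural number $m$ has a unique base-$b$ expansion $m=a_nb^n+\dots+a_1b+a_0$ with $a_0,\dots,a_n\in\{0,1,\dots,b-1\}$ and $a_n\neq 0$. The number $m$ is antipalindromic in base $b$ if $a_j=b-1-a_{n-j}$ for all $j\in\{0,1,\dots,n\}$. *)

(* Defs.v *)
From mathcomp Require Import all_boot.

(* Base-b expansion of m >= 1: m = sum_{j=0}^{n} a_j b^j with n = trunc_log b m
   (the largest n with b^n <= m), and the j-th digit a_j = (m %/ b^j) %% b. *)
Definition digit (b m j : nat) : nat := (m %/ b ^ j) %% b.
Definition ndigits_top (b m : nat) : nat := trunc_log b m.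

Definition antipalindromic (b m : nat) : Prop :=
  0 < m /\
  forall j, j <= ndigits_top b m ->
    digit b m j = b - 1 - digit b m (ndigits_top b m - j).

(* Main.v *)
Require Import Defs.
From mathcomp Require Import all_boot.
From mathcomp Require Import zify.

Lemma digit_sum (d : nat) : forall N m, m < d.+1 ^ N ->
  m = \sum_(j < N) digit d.+1 m j %[mod d].
Proof.
elim=> [|N IH] m hm.
  by rewrite expn0 ltnS leqn0 in hm; rewrite (eqP hm) big_ord0.
rewrite big_ord_recl /digit expn0 divn1.
under eq_bigr => i _ do rewrite lift0 expnS divnMA.
have hlt : m %/ d.+1 < d.+1 ^ N by rewrite ltn_divLR // mulnC -expnS.
rewrite -modnDmr -(IH _ hlt) modnDmr.
rewrite {1}(divn_eq m d.+1) mulnSr -addnA modnMDl addnC.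
done.
Qed.

(* p = (b-1)/2 is stated as 2 * p = b - 1 (so for even b no prime qualifies). *)
Theorem mainTheorem5 (b p : nat) : 3 < b -> prime p -> antipalindromic b p ->
  p.*2 = b - 1.
Proof.
move=> hb pp [hp hdig].
case: b hb hdig => // d hd hdig.
rewrite subn1 /=.
case: (ltnP p d.+1) => hpb.
  have h0 : ndigits_top d.+1 p = 0.
    by apply/eqP; rewrite /ndigits_top trunc_log_eq0; apply/orP; right; rewrite /=; lia.
  have := hdig 0 (leq0n _).
  rewrite h0 subn0 /digit expn0 divn1 modn_small //.
  lia.
set n := ndigits_top d.+1 p.
have hlt : p < d.+1 ^ n.+1 by apply: trunc_log_ltn; lia.
have hc := digit_sum d n.+1 p hlt.
have hS : (\sum_(j < n.+1) digit d.+1 p j).*2 = n.+1 * d.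
  rewrite -addnn {1}(reindex_inj rev_ord_inj) /= -big_split /=.
  rewrite (eq_bigr (fun=> d)); first by rewrite sum_nat_const card_ord.
  move=> i _; rewrite /= subSS (hdig i); last by rewrite -ltnS ltn_ord.
  have hx : digit d.+1 p (n - i) < d.+1 by apply: ltn_pmod.
  move: hx; move: (digit _ _ _) => x hx; lia.
have hdv : d %| p * 2.
  have e : p * 2 = (\sum_(j < n.+1) digit d.+1 p j) * 2 %[mod d].
    by rewrite -modnMml hc modnMml.
  by rewrite /dvdn e muln2 hS modnMl.
case: (boolP (coprime d p)) => hcop.
  rewrite Gauss_dvdr // in hdv.
  have := dvdn_leq (isT : 0 < 2) hdv; lia.
rewrite coprime_sym prime_coprime // negbK in hcop.
have := dvdn_leq (_ : 0 < d) hcop; lia.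
Qed.
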